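(* Let $K$ be a field and $X$ a finite connected poset. Let $\theta:B\to B$ be an admissible bijection which is monotone on maximal chains in $X$, and let $\sigma:X^2_<\to K^*$ be compatible with $\theta$. Then there exists an elementary Lie automorphism $\varphi$ of $I(X,K)$ such that $\varphi(e_{xy})=\sigma(x,y)\theta(e_{xy})$ for all $x<y$.
   Context: A walk is a sequence $u_0,\dots,u_m$ in $X$ such that for each $i$ one of $u_i,u_{i+1}$ covers the other; closed if $u_0=u_m$; $X$ is connected if any two elements are joined by a walk. $I(X,K)$ is the incidence algebra: functions $f:X\times X\to K$ with $f(x,y)=0$ unless $x\le y$, product $(fg)(x,y)=\sum_{x\le t\le y}f(x,t)g(t,y)$; $e_{xy}$ ($x\le y$) is the basis element equal to $1$ at $(x,y)$ and $0$ elsewhere. $B=\{e_{xy}:x<y\}$, $X^2_<=\{(x,y):x<y\}$. A Lie automorphism is a bijective linear map preserving $[f,g]=fg-gf$. With $l(\lfloor x,y\rfloor)$ the maximal length of a chain in $\{z:x\le z\le y\}$ and $L_i=\mathrm{span}_K\{e_{xy}:l(\lfloor x,y\rfloor)=i\}$, for a Lie automorphism $\psi$ let $\widetilde\psi$ send $e_{xy}\in L_i$ to the $L_i$-component of $\psi(e_{xy})$; a Lie automorphism is elementary if it equals $\widetilde\psi$ for some Lie automorphism $\psi$ (equivalently, it maps each $L_i$ into $L_i$). $\theta$ is monotone on maximal chains if for every maximal chain $u_1<\dots<u_m$ of $X$ there is a maximal chain $v_1<\dots<v_m$ with either $\theta(e_{u_iu_j})=e_{v_iv_j}$ for all $i<j$,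 or $\theta(e_{u_iu_j})=e_{v_{m-j+1}v_{m-i+1}}$ for all $i<j$. For a closed walk $\Gamma:u_0,\dots,u_m=u_0$ and $z\in X$: $s^+(z)$ = number of $i$ with $u_i<u_{i+1}$ and $\theta(e_{zw})=e_{u_iu_{i+1}}$ for some $w>z$; $s^-(z)$ = number of $i$ with $u_i>u_{i+1}$ and $\theta(e_{zw})=e_{u_{i+1}u_i}$ for some $w>z$; $t^+(z)$ = number of $i$ with $u_i<u_{i+1}$ and $\theta(e_{wz})=e_{u_iu_{i+1}}$ for some $w<z$; $t^-(z)$ = number of $i$ with $u_i>u_{i+1}$ and $\theta(e_{wz})=e_{u_{i+1}u_i}$ for some $w<z$. $\theta$ is admissible if $s^+(z)-s^-(z)=t^+(z)-t^-(z)$ for all closed walks and all $z$. $\sigma$ is compatible with $\theta$ if for all $x<y<z$: $\sigma(x,z)=\sigma(x,y)\sigma(y,z)$ whenever $\theta(e_{xz})=\theta(e_{xy})\theta(e_{yz})$, and $\sigma(x,z)=-\sigma(x,y)\sigma(y,z)$ whenever $\theta(e_{xz})=\theta(e_{yz})\theta(e_{xy})$. *)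

(* Defs.v *)
From HB Require Import structures.
From mathcomp Require Import all_boot all_order all_algebra.
Set Implicit Arguments. Unset Strict Implicit. Unset Printing Implicit Defensive.
Import Order.TTheory GRing.Theory.
Local Open Scope order_scope.

Section Incidence.
Variables (d : Order.disp_t) (X : finPOrderType d) (K : fieldType).

(* Elements of I(X,K) are represented inside the K-vector space of all
   functions X*X -> K, as those vanishing off {(x,y) : x <= y}. *)
Local Notation ifun := {ffun X * X -> K}.

Definition incid (f : ifun) : bool :=
  [forall p : X * X, ~~ (p.1 <= p.2) ==> (f p == 0%R)].

Definition imul (f g : ifun) : ifun :=
  [ffun p : X * X => (\sum_(t : X | ((p.1 <= t) && (t <= p.2))%O) f (p.1, t) * g (t, p.2))%R].

Definition iscale (a : K) (f : ifun) : ifun := [ffun p => a * f p]%R.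

Definition ilie (f g : ifun) : ifun := (imul f g - imul g f)%R.

Definition eu (x y : X) : ifun := [ffun p : X * X => if p == (x, y) then 1%R else 0%R].

Definition lie_aut (phi : ifun -> ifun) : Prop :=
  [/\ (forall f, incid f -> incid (phi f)),
      (forall (a : K) f g, incid f -> incid g -> phi (iscale a f + g)%R = (iscale a (phi f) + phi g)%R),
      (forall f g, incid f -> incid g -> phi f = phi g -> f = g),
      (forall g, incid g -> exists2 f, incid f & phi f = g) &
      (forall f g, incid f -> incid g -> phi (ilie f g) = ilie (phi f) (phi g))].

Definition chain_in (x y : X) (n : nat) : bool :=
  [exists s : n.+1.-tuple X, sorted <%O (tval s) && all (fun z => (x <= z) && (z <= y)) s].

Definition lint (x y : X) : nat := (\max_(n < #|X|.+1 | chain_in x y n) n)%N.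

Definition projL (i : nat) (f : ifun) : ifun :=
  [ffun p : X * X => if (p.1 <= p.2) && (lint p.1 p.2 == i) then f p else 0%R].

(* elementary Lie automorphism: phi = psi~ for some Lie automorphism psi,
   where psi~ is the linear map sending e_xy (in L_i) to the L_i-component
   of psi(e_xy). *)
Definition elementary (phi : ifun -> ifun) : Prop :=
  lie_aut phi /\
  exists psi, lie_aut psi /\
    forall x y : X, x <= y -> phi (eu x y) = projL (lint x y) (psi (eu x y)).

Definition covers (u v : X) : bool := (v < u) && [forall w, ~~ ((v < w) && (w < u))].
Definition adj (u v : X) : bool := covers u v || covers v u.

Definition connected_poset : Prop :=
  forall x y : X, exists s : seq X, path adj x s /\ last x s = y.

(* B = {e_xy : x < y}, indexed by X^2_< *)
Definition Bidx := {p : X * X | p.1 < p.2}.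

(* the pair (u,v) with theta(e_xy) = e_uv (meaningful for x < y) *)
Definition thv (theta : Bidx -> Bidx) (x y : X) : X * X :=
  if insub (x, y) is Some b then val (theta b) else (x, y).

Definition thE (theta : Bidx -> Bidx) (x y : X) : ifun :=
  eu (thv theta x y).1 (thv theta x y).2.

Definition max_chain (s : seq X) : bool :=
  sorted <%O s && [forall z, (z \notin s) ==> has (fun w => ~~ (z >=< w)) s].

Definition monotone_max_chains (theta : Bidx -> Bidx) : Prop :=
  forall s : seq X, max_chain s ->
  exists t : seq X, [/\ max_chain t, size t = size s &
    (forall x0 : X, forall i j, (i < j < size s)%N ->
        thv theta (nth x0 s i) (nth x0 s j) = (nth x0 t i, nth x0 t j)) \/
    (forall x0 : X, forall i j, (i < j < size s)%N ->
        thv theta (nth x0 s i) (nth x0 s j) =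
          (nth x0 t (size s - 1 - j), nth x0 t (size s - 1 - i)))].

(* counts along a closed walk u0 :: s (u_i = nth u0 (u0::s) i,
   u_{i+1} = nth u0 s i, for i < m = size s) *)
Definition cnt (P : X -> X -> bool) (u0 : X) (s : seq X) : nat :=
  count (fun i => P (nth u0 (u0 :: s) i) (nth u0 s i)) (iota 0 (size s)).

Definition s_plus theta z a b :=
  (a < b) && [exists w, (z < w) && (thv theta z w == (a, b))].
Definition s_minus theta z a b :=
  (b < a) && [exists w, (z < w) && (thv theta z w == (b, a))].
Definition t_plus theta z a b :=
  (a < b) && [exists w, (w < z) && (thv theta w z == (a, b))].
Definition t_minus theta z a b :=
  (b < a) && [exists w, (w < z) && (thv theta w z == (b, a))].

Definition admissible (theta : Bidx -> Bidx) : Prop :=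
  forall (u0 : X) (s : seq X), path adj u0 s -> last u0 s = u0 ->
  forall z : X,
    ((cnt (s_plus theta z) u0 s)%:Z - (cnt (s_minus theta z) u0 s)%:Z =
     (cnt (t_plus theta z) u0 s)%:Z - (cnt (t_minus theta z) u0 s)%:Z)%R.

Definition compatible (theta : Bidx -> Bidx) (sigma : X -> X -> K) : Prop :=
  forall x y z : X, x < y -> y < z ->
    (thE theta x z = imul (thE theta x y) (thE theta y z) ->
       sigma x z = (sigma x y * sigma y z)%R) /\
    (thE theta x z = imul (thE theta y z) (thE theta x y) ->
       sigma x z = (- (sigma x y * sigma y z))%R).

End Incidence.

(* Main.v *)
Require Import Defs.
From HB Require Import structures.
From mathcomp Require Import all_boot all_order all_algebra.
From mathcomp Require Import zify ring.
Import Order.TTheory GRing.Theory.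
Local Open Scope order_scope.

Set Implicit Arguments. Unset Strict Implicit. Unset Printing Implicit Defensive.

Section Thv.
Variables (d : Order.disp_t) (X : finPOrderType d) (theta : Bidx X -> Bidx X).

Lemma thvE (x y : X) (h : x < y) : thv theta x y = val (theta (exist _ (x, y) h)).
Proof. by rewrite /thv insubT. Qed.

Lemma thv_lt (x y : X) : x < y -> (thv theta x y).1 < (thv theta x y).2.
Proof. by move=> h; rewrite (thvE h); case: (theta _). Qed.

Lemma thv_inj (x y x' y' : X) : injective theta -> x < y -> x' < y' ->
  thv theta x y = thv theta x' y' -> (x, y) = (x', y').
Proof.
move=> inj h h'; rewrite (thvE h) (thvE h') => /val_inj /inj.
by move/(congr1 val).
Qed.

Lemma sorted_comparable (m : seq X) : sorted <%O m -> {in m &, forall a b, a >=< b}.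
Proof.
move=> sm a b am bm.
rewrite -(nth_index a am) -(nth_index a bm) /Order.comparable.
rewrite !(lt_sorted_leq_nth a sm) ?inE ?index_mem //.
exact: leq_total.
Qed.

Lemma lt_index (m : seq X) a b : sorted <%O m -> a \in m -> b \in m -> a < b ->
  (index a m < index b m)%N.
Proof.
move=> sm am bm ab; rewrite ltnNge; apply/negP => h.
have := lt_sorted_leq_nth a sm; move=> /(_ (index b m) (index a m)).
rewrite !inE !index_mem => /(_ bm am); rewrite h !nth_index // => ba.
by move: (lt_le_trans ab ba); rewrite ltxx.
Qed.

Lemma ext_step (m : seq X) : sorted <%O m -> ~~ max_chain m ->
  exists m', [/\ sorted <%O m', {subset m <= m'}, size m' = (size m).+1 &
     (size m' <= #|X|)%N].
Proof.
move=> sm nmc.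
move: nmc; rewrite /max_chain sm /= negb_forall => /existsP [z].
rewrite negb_imply => /andP [zm /hasPn hz].
have hz' : {in m, forall w, z >=< w} by move=> w /hz; rewrite negbK.
set m' := sort <=%O (z :: m).
have um : uniq m by move: sm; rewrite lt_sorted_uniq_le => /andP[].
have sm' : sorted <%O m'.
  rewrite lt_sorted_uniq_le sort_uniq /= zm um /=.
  apply: (sort_sorted_in (P := mem (z :: m))); last by apply/allP.
  move=> a b; rewrite !inE => /orP [/eqP -> | ha] /orP [/eqP -> | hb].
  - by rewrite le_refl.
  - exact: hz'.
  - rewrite orbC; exact: hz'.
  - exact: (sorted_comparable sm ha hb).
exists m'; split => //.
- by move=> x xm; rewrite mem_sort inE xm orbT.
- by rewrite size_sort.
- move: sm'; rewrite lt_sorted_uniq_le => /andP [/card_uniqP <- _]; exact: max_card.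
Qed.

Lemma ext_max (A : seq X) : {in A &, forall a b, a >=< b} ->
  exists m, max_chain m /\ {subset A <= m}.
Proof.
move=> cA.
suff: forall n m, sorted <%O m -> {subset A <= m} -> (#|X| - size m <= n)%N ->
   exists m', max_chain m' /\ {subset A <= m'}.
  move=> /(_ #|X| (sort <=%O (undup A))); apply.
  - rewrite lt_sorted_uniq_le sort_uniq undup_uniq /=.
    apply: (sort_sorted_in (P := mem A)); first by move=> a b ha hb; apply: cA.
    by apply/allP=> x; rewrite mem_undup.
  - by move=> x; rewrite mem_sort mem_undup.
  - by rewrite leq_subr.
elim=> [|n IH] m sm Am hn;
  (case: (boolP (max_chain m)) => [mc|nmc]; first by exists m);
  have [m' [sm' sub szm' bnd]] := ext_step sm nmc.
  move: hn bnd szm'; rewrite /= => h1 h2 h3; exfalso; lia.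
apply: (IH m' sm').
  by move=> x /Am /sub.
move: hn bnd szm'; rewrite /= => h1 h2 h3; lia.
Qed.

Lemma chain_img (A : seq X) : {in A &, forall a b, a >=< b} ->
  monotone_max_chains theta ->
  exists f : X -> X,
    (forall a b, a \in A -> b \in A -> a < b -> thv theta a b = (f a, f b)) \/
    (forall a b, a \in A -> b \in A -> a < b -> thv theta a b = (f b, f a)).
Proof.
move=> cA mono; have [m [mc sub]] := ext_max cA.
have [t [mt st [H|H]]] := mono m mc; have sm : sorted <%O m by case/andP: mc.
- exists (fun z => nth z t (index z m)); left => a b aA bA ab.
  have am := sub _ aA; have bm := sub _ bA.
  have iab := lt_index sm am bm ab.
  have := H a (index a m) (index b m); rewrite iab index_mem bm => /(_ isT).
  rewrite !nth_index // => ->; congr pair; apply: set_nth_default;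
    by rewrite st index_mem.
- exists (fun z => nth z t (size m - 1 - index z m)); right => a b aA bA ab.
  have am := sub _ aA; have bm := sub _ bA.
  have iab := lt_index sm am bm ab.
  have := H a (index a m) (index b m); rewrite iab index_mem bm => /(_ isT).
  have ha : (index a m < size m)%N by rewrite index_mem.
  have hb : (index b m < size m)%N by rewrite index_mem.
  rewrite !nth_index // => ->; congr pair; apply: set_nth_default; rewrite st;
    lia.
Qed.

End Thv.

Section Tri.
Variables (d : Order.disp_t) (X : finPOrderType d) (theta : Bidx X -> Bidx X).
Hypothesis mono : monotone_max_chains theta.
Hypothesis inj : injective theta.

Definition tri_case (x y z b : X) :=
  (thv theta x y = ((thv theta x z).1, b) /\ thv theta y z = (b, (thv theta x z).2)) \/
  (thv theta x y = (b, (thv theta x z).2) /\ thv theta y z = ((thv theta x z).1, b)).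

Lemma tri_fwd (x y z : X) : x < y -> y < z -> exists b, tri_case x y z b.
Proof.
move=> xy yz; have xz := lt_trans xy yz.
have cA : {in [:: x; y; z] &, forall a b, a >=< b}.
  move=> a b; rewrite !inE => /or3P [] /eqP -> /or3P [] /eqP ->;
  first [ exact: comparablexx | (apply: lt_comparable; done) |
          (rewrite comparable_sym; apply: lt_comparable; done)].
have [f [H|H]] := chain_img cA mono; exists (f y).
- by left; rewrite !H ?inE ?eqxx ?orbT.
- by right; rewrite !H ?inE ?eqxx ?orbT.
Qed.

Definition midv (x y z : X) : X :=
  if (thv theta x y).1 == (thv theta x z).1 then (thv theta x y).2 else (thv theta x y).1.

Lemma tri_mid (x y z b : X) : x < y -> y < z -> tri_case x y z b ->
  [/\ midv x y z = b, (thv theta x z).1 < b & b < (thv theta x z).2].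
Proof.
move=> xy yz; have h1 := thv_lt theta xy; have h2 := thv_lt theta yz.
rewrite /midv; case=> [[e1 e2]|[e1 e2]]; rewrite e1 /= ?eqxx; move: h1 h2; rewrite e1 e2 //=.
move=> h1 h2; rewrite (gt_eqF h2); split => //.
Qed.

Definition Tri := {t : X * X * X | (t.1.1 < t.1.2) && (t.1.2 < t.2)}.

Lemma tri_case_uniq x y z b b' : x < y -> y < z -> tri_case x y z b -> tri_case x y z b' -> b = b'.
Proof.
move=> xy yz h h'; have [<- _ _] := tri_mid xy yz h; have [<- _ _] := tri_mid xy yz h'; done.
Qed.

Definition Thf (t : X * X * X) : X * X * X :=
  let: (x, y, z) := t in ((thv theta x z).1, midv x y z, (thv theta x z).2).

Lemma Thf_in (t : Tri) : let u := Thf (val t) in (u.1.1 < u.1.2) && (u.1.2 < u.2).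
Proof.
case: t => [[[x y] z]] /= /andP [xy yz].
have [b hb] := tri_fwd xy yz; have [-> h1 h2] := tri_mid xy yz hb.
by rewrite h1 h2.
Qed.

Definition ThT (t : Tri) : Tri := exist _ (Thf (val t)) (Thf_in t).

Lemma ThT_inj : injective ThT.
Proof.
move=> [[[x y] z] h] [[[x' y'] z'] h'] /(congr1 val) /=.
have /andP [/= xy yz] := h; have /andP [/= xy' yz'] := h'.
have xz := lt_trans xy yz; have xz' := lt_trans xy' yz'.
have [b hb] := tri_fwd xy yz; have [-> _ _] := tri_mid xy yz hb.
have [b' hb'] := tri_fwd xy' yz'; have [-> _ _] := tri_mid xy' yz' hb'.
case=> e1 eb e2.
have exz : thv theta x z = thv theta x' z' by rewrite [LHS]surjective_pairing e1 e2 -surjective_pairing.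
have [ex ez] : x = x' /\ z = z' by case: (thv_inj inj xz xz' exz) => -> ->.
subst x' z' b'.
suff ey : y = y' by apply: val_inj => /=; rewrite ey.
case: hb => [[h1 h2]|[h1 h2]]; case: hb' => [[h1' h2']|[h1' h2']].
- by have [] := thv_inj inj xy xy' (etrans h1 (esym h1')).
- have [e e'] := thv_inj inj xy yz' (etrans h1 (esym h2')).
  by subst; move: yz; rewrite ltxx.
- have [e e'] := thv_inj inj yz xy' (etrans h2 (esym h1')).
  by subst; move: yz'; rewrite ltxx.
- by have [] := thv_inj inj yz yz' (etrans h2 (esym h2')).
Qed.

Lemma tri_inv (a b c : X) : a < b -> b < c ->
  exists x y z, [/\ x < y, y < z, thv theta x z = (a, c) & tri_case x y z b].
Proof.
move=> ab bc.
have hP : ((a, b, c).1.1 < (a, b, c).1.2) && ((a, b, c).1.2 < (a, b, c).2) by rewrite /= ab bc.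
have [g gK Kg] := injF_bij ThT_inj.
move: (Kg (exist _ (a, b, c) hP)).
case: (g _) => [[[x y] z] h] /(congr1 val) /=.
have /andP [/= xy yz] := h.
have [b' hb] := tri_fwd xy yz; have [-> _ _] := tri_mid xy yz hb.
case=> e1 eb e2; subst b'.
exists x, y, z; split => //.
by rewrite [LHS]surjective_pairing e1 e2.
Qed.

End Tri.

Section Lint.
Variables (d : Order.disp_t) (X : finPOrderType d).

Lemma chain_inP (x y : X) n : chain_in x y n <->
  exists s : seq X, [/\ size s = n.+1, sorted <%O s & all (fun z => (x <= z) && (z <= y)) s].
Proof.
split.
  by case/existsP => t /andP [h1 h2]; exists (tval t); rewrite size_tuple.
case=> s [hs h1 h2]; apply/existsP; exists (tcast hs (in_tuple s)).
by rewrite val_tcast /= h1 h2.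
Qed.

Lemma chain_size (x y : X) n : chain_in x y n -> (n < #|X|.+1)%N.
Proof.
case/chain_inP => s [hs h1 _]; move: h1; rewrite lt_sorted_uniq_le => /andP [/card_uniqP hc _].
have := max_card (mem s); rewrite hc hs ltnS => h; exact: ltnW h.
Qed.

Lemma lint_ge (x y : X) n : chain_in x y n -> (n <= lint x y)%N.
Proof.
move=> h; rewrite /lint.
exact: (@leq_bigmax_cond _ (fun i : 'I_#|X|.+1 => chain_in x y i) (fun i => nat_of_ord i) (Ordinal (chain_size h)) h).
Qed.

Lemma lint_spec (x y : X) : x <= y -> chain_in x y (lint x y).
Proof.
move=> xy.
have h0 : chain_in x y 0 by apply/chain_inP; exists [:: x]; rewrite /= le_refl xy.
have hpos : (0 < #|[pred n : 'I_#|X|.+1 | chain_in x y n]|)%N.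
  by apply/card_gt0P; exists (Ordinal (chain_size h0)).
have -> : lint x y = (\max_(i in [pred n : 'I_#|X|.+1 | chain_in x y n]) i)%N by [].
have [i0 Pi0 ->] := @eq_bigmax_cond _ _ (fun n => nat_of_ord n) hpos.
exact: Pi0.
Qed.

Lemma lint_refl (x : X) : lint x x = 0%N.
Proof.
have := lint_spec (le_refl x); case/chain_inP => s [hs h1 h2].
move: hs h1 h2; case: s => [//|a [|b s]] /= [hs]; first by rewrite hs.
case/andP => ab _; case/andP => /andP [xa ax]; case/andP => /andP [xb bx] _.
have ea : a = x by apply/le_anti; rewrite ax xa.
have eb : b = x by apply/le_anti; rewrite bx xb.
by move: ab; rewrite ea eb ltxx.
Qed.

Variable theta : Bidx X -> Bidx X.
Hypothesis mono : monotone_max_chains theta.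
Hypothesis inj : injective theta.

Lemma lint_mono (x y : X) : x < y -> (lint x y <= lint (thv theta x y).1 (thv theta x y).2)%N.
Proof.
move=> xy; have := lint_spec (ltW xy); case/chain_inP => s [hs ss hin].
set n := lint x y in hs *.
have hx : {in s, forall z, x <= z} by move=> z /(allP hin) /andP [].
have hy : {in s, forall z, z <= y} by move=> z /(allP hin) /andP [].
have cA : {in [:: x, y & s] &, forall a b, a >=< b}.
  have cs := sorted_comparable ss.
  move=> a b; rewrite !inE => /or3P [] ha /or3P [] hb;
  rewrite ?(eqP ha) ?(eqP hb);
  first [ exact: comparablexx | exact: cs | (apply: lt_comparable; done)
        | (rewrite comparable_sym; apply: lt_comparable; done)
        | (apply: le_comparable; by [apply: hx | apply: hy])
        | (rewrite comparable_sym; apply: le_comparable; by [apply: hx | apply: hy])].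
have [f [H|H]] := chain_img cA mono.
- rewrite H ?inE ?eqxx ?orbT //=; apply: lint_ge; apply/chain_inP.
  exists (map f s); split; first by rewrite size_map.
  + apply: (homo_sorted_in _ (allss s) ss).
    move=> a b ha hb ab; have := thv_lt theta ab; rewrite H //= ?inE ?ha ?hb ?orbT //.
  + apply/allP => _ /mapP [z zs ->]; apply/andP; split.
      have := hx z zs; rewrite le_eqVlt => /orP [/eqP -> //| xz].
      by apply: ltW; have := thv_lt theta xz; rewrite H //= ?inE ?zs ?eqxx ?orbT.
    have := hy z zs; rewrite le_eqVlt => /orP [/eqP -> //| zy].
    by apply: ltW; have := thv_lt theta zy; rewrite H //= ?inE ?zs ?eqxx ?orbT.
- rewrite H ?inE ?eqxx ?orbT //=; apply: lint_ge; apply/chain_inP.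
  exists (rev (map f s)); split; first by rewrite size_rev size_map.
  + rewrite rev_sorted.
    apply: (homo_sorted_in _ (allss s) ss).
    move=> a b ha hb ab; have := thv_lt theta ab; rewrite H //= ?inE ?ha ?hb ?orbT //.
  + apply/allP => w; rewrite mem_rev => /mapP [z zs ->]; apply/andP; split.
      have := hy z zs; rewrite le_eqVlt => /orP [/eqP -> //| zy].
      by apply: ltW; have := thv_lt theta zy; rewrite H //= ?inE ?zs ?eqxx ?orbT.
    have := hx z zs; rewrite le_eqVlt => /orP [/eqP -> //| xz].
    by apply: ltW; have := thv_lt theta xz; rewrite H //= ?inE ?zs ?eqxx ?orbT.
Qed.

Lemma sum_le_eq (I : finType) (F G : I -> nat) :
  (forall i, F i <= G i)%N -> (\sum_i F i = \sum_i G i)%N -> forall i, F i = G i.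
Proof.
move=> hle heq i; apply/eqP; rewrite eqn_leq hle /=; apply/negP => /negP; rewrite -ltnNge => lt.
move: heq; rewrite (bigD1 i) //= [X in _ = X](bigD1 i) //=.
have := @leq_sum I (index_enum I) (fun j => j != i) F G (fun j _ => hle j); lia.
Qed.

Lemma lint_pres (x y : X) : x < y -> lint (thv theta x y).1 (thv theta x y).2 = lint x y.
Proof.
move=> xy.
pose F := fun b : Bidx X => lint (val b).1 (val b).2.
pose G := fun b : Bidx X => lint (val (theta b)).1 (val (theta b)).2.
have hle : forall b, (F b <= G b)%N.
  by case=> [[u v] uv]; rewrite /F /G -thvE; apply: lint_mono.
have heq : (\sum_b F b = \sum_b G b)%N by rewrite (reindex_inj inj).
have := sum_le_eq hle heq (exist _ (x, y) xy); rewrite /F /G /= -thvE => ->. done.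
Qed.

End Lint.

Section Pot.
Variables (d : Order.disp_t) (X : finPOrderType d) (theta th' : Bidx X -> Bidx X).
Hypothesis thK : cancel theta th'.
Hypothesis thK' : cancel th' theta.

Definition pre (u v : X) : X * X := if insub (u, v) is Some b then val (th' b) else (u, v).

Lemma preE (u v : X) (h : u < v) : pre u v = val (th' (exist _ (u, v) h)).
Proof. by rewrite /pre insubT. Qed.

Lemma pre_lt (u v : X) : u < v -> (pre u v).1 < (pre u v).2.
Proof. by move=> h; rewrite (preE h); case: (th' _). Qed.

Lemma thv_pre (u v : X) (h : u < v) : thv theta (pre u v).1 (pre u v).2 = (u, v).
Proof.
rewrite (thvE theta (pre_lt h)); move: (pre_lt h); rewrite (preE h) => h'.
have -> : exist _ ((val (th' (exist _ (u, v) h))).1, (val (th' (exist _ (u, v) h))).2) h'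
   = th' (exist _ (u, v) h) by apply: val_inj; rewrite /= -surjective_pairing.
by rewrite thK'.
Qed.

Lemma pre_thv (x y : X) (h : x < y) : pre (thv theta x y).1 (thv theta x y).2 = (x, y).
Proof.
rewrite (preE (thv_lt theta h)); move: (thv_lt theta h); rewrite (thvE theta h) => h'.
have -> : exist _ ((val (theta (exist _ (x, y) h))).1, (val (theta (exist _ (x, y) h))).2) h'
   = theta (exist _ (x, y) h) by apply: val_inj; rewrite /= -surjective_pairing.
by rewrite thK.
Qed.


Definition om (z a b : X) : int :=
  ((s_plus theta z a b)%:Z - (s_minus theta z a b)%:Z
  - (t_plus theta z a b)%:Z + (t_minus theta z a b)%:Z)%R.

Fixpoint Om (z u0 : X) (s : seq X) : int :=
  if s is v :: s' then (om z u0 v + Om z v s')%R else 0%R.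

Lemma cnt_cons (P : X -> X -> bool) u0 v s : cnt P u0 (v :: s) = (P u0 v + cnt P v s)%N.
Proof.
rewrite /cnt /=; congr addn.
rewrite -[1%N]/(1 + 0)%N iotaDl count_map; apply: eq_in_count => i /=.
rewrite mem_iota add0n => /andP [_ hi]; rewrite add0n.
rewrite (@set_nth_default _ (v :: s) v u0) ?(@set_nth_default _ s v u0) //=; exact: ltnW.
Qed.

Lemma Om_cnt z u0 s : Om z u0 s =
  ((cnt (s_plus theta z) u0 s)%:Z - (cnt (s_minus theta z) u0 s)%:Z
  - (cnt (t_plus theta z) u0 s)%:Z + (cnt (t_minus theta z) u0 s)%:Z)%R.
Proof.
elim: s u0 => [|v s IH] u0 /=; first by rewrite /cnt /=.
rewrite IH !cnt_cons /om !PoszD; lia.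
Qed.

Lemma adm_Om z u0 s : admissible theta -> path (adj (X:=X)) u0 s -> last u0 s = u0 -> Om z u0 s = 0%R.
Proof.
move=> adm p l; have := adm u0 s p l z; rewrite Om_cnt; lia.
Qed.

Lemma Om_cat z u0 s1 s2 : Om z u0 (s1 ++ s2) = (Om z u0 s1 + Om z (last u0 s1) s2)%R.
Proof. by elim: s1 u0 => [|v s IH] u0 /=; rewrite ?add0r // IH addrA. Qed.

Lemma om_sym z a b : om z b a = (- om z a b)%R.
Proof. rewrite /om /s_plus /s_minus /t_plus /t_minus; lia. Qed.

Lemma last_rev_belast (x : X) p : last (last x p) (rev (belast x p)) = x.
Proof.
have : rev (x :: p) = last x p :: rev (belast x p) by rewrite lastI rev_rcons.
rewrite rev_cons => /(congr1 (last x)); rewrite last_rcons /= => h; exact: esym h.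
Qed.

Lemma Om_rev z x p : Om z (last x p) (rev (belast x p)) = (- Om z x p)%R.
Proof.
elim: p x => [|v p IH] x /=; first by rewrite oppr0.
rewrite rev_cons -cats1 Om_cat IH /= last_rev_belast om_sym; lia.
Qed.

Lemma adj_sym (a b : X) : adj a b = adj b a.
Proof. by rewrite /adj orbC. Qed.

Lemma path_rev (x : X) p : path (adj (X:=X)) x p -> path (adj (X:=X)) (last x p) (rev (belast x p)).
Proof.
by rewrite rev_path; apply: sub_path => a b; rewrite adj_sym.
Qed.

Hypothesis conn : connected_poset X.
Hypothesis adm : admissible theta.
Variable z0 : X.

Lemma connb (u : X) : exists s : seq X, path (adj (X:=X)) z0 s && (last z0 s == u).
Proof. by have [s [p l]] := conn z0 u; exists s; rewrite p l eqxx. Qed.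

Definition W (u : X) : seq X := xchoose (connb u).

Lemma W_spec u : path (adj (X:=X)) z0 (W u) /\ last z0 (W u) = u.
Proof. by have /andP [p /eqP l] := xchooseP (connb u). Qed.

Definition P (z u : X) : int := Om z z0 (W u).

Lemma P_step (z a b : X) : adj a b -> P z b = (P z a + om z a b)%R.
Proof.
move=> ab; have [pa la] := W_spec a; have [pb lb] := W_spec b.
set s := W a ++ (b :: rev (belast z0 (W b))).
have ps : path (adj (X:=X)) z0 s.
  rewrite cat_path pa la /= ab /=; have := path_rev pb; by rewrite lb.
have ls : last z0 s = z0.
  by rewrite last_cat /= -{1}lb last_rev_belast.
have hr := Om_rev z z0 (W b); rewrite lb in hr.
have := adm_Om z adm ps ls; rewrite Om_cat la /= hr /P; lia.
Qed.

Definition g (z a b : X) : int := (((pre a b).1 == z)%:Z - ((pre a b).2 == z)%:Z)%R.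

Lemma om_g (z a b : X) : a < b -> om z a b = g z a b.
Proof.
move=> ab; rewrite /om /s_minus /t_minus (lt_gtF ab) /= /g.
have hs : s_plus theta z a b = ((pre a b).1 == z).
  rewrite /s_plus ab /=; apply/existsP/eqP.
    case=> w /andP [zw /eqP e]; have := pre_thv zw; rewrite e /= => -> //.
  by move=> e; exists (pre a b).2; rewrite -e (pre_lt ab) /= thv_pre.
have ht : t_plus theta z a b = ((pre a b).2 == z).
  rewrite /t_plus ab /=; apply/existsP/eqP.
    case=> w /andP [wz /eqP e]; have := pre_thv wz; rewrite e /= => -> //.
  by move=> e; exists (pre a b).1; rewrite -e (pre_lt ab) /= thv_pre.
rewrite hs ht; lia.
Qed.

Hypothesis mono : monotone_max_chains theta.
Let inj : injective theta := can_inj thK.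

Lemma g_add (z a b c : X) : a < b -> b < c -> g z a c = (g z a b + g z b c)%R.
Proof.
move=> ab bc; have [x [y [w [xy yw e hc]]]] := tri_inv mono inj ab bc.
have ac := lt_trans ab bc.
have hac : pre a c = (x, w) by have := pre_thv (lt_trans xy yw); rewrite e.
rewrite /g hac /=; rewrite /tri_case e /= in hc.
case: hc => [[h1 h2]|[h1 h2]].
- have hab : pre a b = (x, y) by have := pre_thv xy; rewrite h1.
  have hbc : pre b c = (y, w) by have := pre_thv yw; rewrite h2.
  rewrite hab hbc /=; lia.
- have hab : pre a b = (y, w) by have := pre_thv yw; rewrite h2.
  have hbc : pre b c = (x, y) by have := pre_thv xy; rewrite h1.
  rewrite hab hbc /=; lia.
Qed.

Definition cpot (z u : X) : int := (- P z u)%R.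

Lemma cpot_g (z a b : X) : a < b -> (cpot z a - cpot z b)%R = g z a b.
Proof.
move=> ab.
have [n hn] : exists n, (#|[pred t : X | (a <= t)%O && (t <= b)%O]| <= n)%N by eexists; exact: leqnn.
elim: n a b ab hn => [|n IH] a b ab hn.
  have h : (0 < #|[pred t : X | (a <= t)%O && (t <= b)%O]|)%N.
    by apply/card_gt0P; exists b; rewrite inE (ltW ab) le_refl.
  by move: hn; rewrite leqNgt h.
case: (boolP (covers b a)) => cov.
  have := P_step z (a:=a) (b:=b); rewrite /adj cov orbT => /(_ isT).
  rewrite /cpot om_g // => ->; lia.
move: cov; rewrite /covers ab /= negb_forall => /existsP [w]; rewrite negbK => /andP [aw wb].
have sub1 : [pred t : X | (a <= t)%O && (t <= w)%O] \proper [pred t : X | (a <= t)%O && (t <= b)%O].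
  apply/properP; split.
    by apply/subsetP => t; rewrite !inE => /andP [-> tw] /=; apply: le_trans tw (ltW wb).
  by exists b; rewrite !inE ?(ltW ab) ?le_refl //= (lt_geF wb).
have sub2 : [pred t : X | (w <= t)%O && (t <= b)%O] \proper [pred t : X | (a <= t)%O && (t <= b)%O].
  apply/properP; split.
    by apply/subsetP => t; rewrite !inE => /andP [wt ->]; rewrite andbT; apply: le_trans (ltW aw) wt.
  by exists a; rewrite !inE ?(ltW ab) ?le_refl //= (lt_geF aw).
have h1 := IH a w aw (leq_trans (proper_card sub1) hn).
have h2 := IH w b wb (leq_trans (proper_card sub2) hn).
rewrite (g_add z aw wb) -h1 -h2; lia.
Qed.

End Pot.

Section Alg.
Local Open Scope ring_scope.
Variables (d : Order.disp_t) (X : finPOrderType d) (K : fieldType).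
Local Notation ifun := {ffun X * X -> K}.
Local Notation imul := (@imul d X K).
Local Notation ilie := (@ilie d X K).
Local Notation iscale := (@iscale d X K).
Local Notation eu := (@eu d X K).

Lemma sum_if_eq (T : finType) (P : pred T) (b : T) (F : T -> K) :
  (\sum_(t | P t) (if t == b then F t else 0) = if P b then F b else 0)%R.
Proof.
case: (boolP (P b)) => Pb.
  rewrite (bigD1 b) //= eqxx big1 ?addr0 // => t /andP [_ /negPf ->] //.
rewrite big1 // => t Pt; case: eqP => // e; subst t; by rewrite Pt in Pb.
Qed.

Lemma imul_addl (f g h : ifun) : imul (f + g) h = (imul f h + imul g h)%R.
Proof.
apply/ffunP => p; rewrite !ffunE -big_split /=; apply: eq_bigr => t _.
by rewrite !ffunE mulrDl.
Qed.

Lemma imul_addr (f g h : ifun) : imul h (f + g) = (imul h f + imul h g)%R.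
Proof.
apply/ffunP => p; rewrite !ffunE -big_split /=; apply: eq_bigr => t _.
by rewrite !ffunE mulrDr.
Qed.

Lemma imul0l (f : ifun) : imul 0 f = 0%R.
Proof. by apply/ffunP => p; rewrite !ffunE big1 // => t _; rewrite ffunE mul0r. Qed.

Lemma imul0r (f : ifun) : imul f 0 = 0%R.
Proof. by apply/ffunP => p; rewrite !ffunE big1 // => t _; rewrite ffunE mulr0. Qed.

Lemma imul_scalel (a : K) (f g : ifun) : imul (iscale a f) g = iscale a (imul f g).
Proof.
apply/ffunP => p; rewrite !ffunE mulr_sumr; apply: eq_bigr => t _.
by rewrite !ffunE mulrA.
Qed.

Lemma imul_scaler (a : K) (f g : ifun) : imul f (iscale a g) = iscale a (imul f g).
Proof.
apply/ffunP => p; rewrite !ffunE mulr_sumr; apply: eq_bigr => t _.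
by rewrite !ffunE mulrCA.
Qed.

Lemma iscale_add (a : K) (f g : ifun) : iscale a (f + g) = (iscale a f + iscale a g)%R.
Proof. by apply/ffunP => p; rewrite !ffunE mulrDr. Qed.

Lemma iscale_opp (a : K) (f : ifun) : iscale a (- f) = (- iscale a f)%R.
Proof. by apply/ffunP => p; rewrite !ffunE mulrN. Qed.

Lemma iscale0 (a : K) : iscale a 0 = 0%R.
Proof. by apply/ffunP => p; rewrite !ffunE mulr0. Qed.

Lemma iscaleA (a b : K) (f : ifun) : iscale a (iscale b f) = iscale (a * b) f.
Proof. by apply/ffunP => p; rewrite !ffunE mulrA. Qed.

Lemma iscale1 (f : ifun) : iscale 1 f = f.
Proof. by apply/ffunP => p; rewrite !ffunE mul1r. Qed.

Lemma iscaleN1 (f : ifun) : iscale (-1) f = (- f)%R.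
Proof. by apply/ffunP => p; rewrite !ffunE mulN1r. Qed.

Lemma ilie_addl (f g h : ifun) : ilie (f + g) h = (ilie f h + ilie g h)%R.
Proof. rewrite /Defs.ilie imul_addl imul_addr; by rewrite opprD !addrA; congr (_ + _)%R; rewrite addrAC. Qed.

Lemma ilie_addr (f g h : ifun) : ilie h (f + g) = (ilie h f + ilie h g)%R.
Proof. rewrite /Defs.ilie imul_addl imul_addr; by rewrite opprD !addrA; congr (_ + _)%R; rewrite addrAC. Qed.

Lemma ilie0l (f : ifun) : ilie 0 f = 0%R.
Proof. by rewrite /Defs.ilie imul0l imul0r subr0. Qed.

Lemma ilie0r (f : ifun) : ilie f 0 = 0%R.
Proof. by rewrite /Defs.ilie imul0l imul0r subr0. Qed.

Lemma ilie_scalel (a : K) (f g : ifun) : ilie (iscale a f) g = iscale a (ilie f g).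
Proof. by rewrite /Defs.ilie imul_scalel imul_scaler /Defs.iscale; apply/ffunP => p; rewrite !ffunE mulrBr. Qed.

Lemma ilie_scaler (a : K) (f g : ifun) : ilie f (iscale a g) = iscale a (ilie f g).
Proof. by rewrite /Defs.ilie imul_scalel imul_scaler /Defs.iscale; apply/ffunP => p; rewrite !ffunE mulrBr. Qed.

Lemma ilie_anti (f g : ifun) : ilie f g = (- ilie g f)%R.
Proof. by rewrite /Defs.ilie opprB. Qed.

Lemma ilie_suml (I : finType) (P : pred I) (F : I -> ifun) g :
  ilie (\sum_(i | P i) F i) g = (\sum_(i | P i) ilie (F i) g)%R.
Proof. by apply: (big_morph (fun f => ilie f g)) => [f h|]; [exact: ilie_addl | exact: ilie0l]. Qed.

Lemma ilie_sumr (I : finType) (P : pred I) (F : I -> ifun) g :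
  ilie g (\sum_(i | P i) F i) = (\sum_(i | P i) ilie g (F i))%R.
Proof. by apply: (big_morph (fun f => ilie g f)) => [f h|]; [exact: ilie_addr | exact: ilie0r]. Qed.

Lemma euE (x y : X) (p : X * X) : eu x y p = if p == (x, y) then 1%R else 0%R.
Proof. by rewrite ffunE. Qed.

Lemma eu_mul (a b c e : X) : imul (eu a b) (eu c e) =
  if (b == c) && (a <= b)%O && (b <= e)%O then eu a e else 0%R.
Proof.
apply/ffunP => [[u v]]; rewrite !ffunE /=.
rewrite (eq_bigr (fun t => if t == b then
      (if (u == a) && (b == c) && (v == e) then 1 else 0) else 0)); last first.
  move=> t _; rewrite !ffunE !xpair_eqE /=.
  case: (eqVneq t b) => [->|tb]; last by rewrite andbF mul0r.
  by rewrite andbT; case: (u == a); case: (b == c); case: (v == e); rewrite ?mulr1 ?mul0r ?mulr0.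
rewrite sum_if_eq.
case H: ((b == c) && (a <= b)%O && (b <= e)%O).
  move/andP: H => [/andP [/eqP bc ab] be]; subst c; rewrite ffunE xpair_eqE eqxx andbT /=.
  by case: (eqVneq u a) => [->|]; case: (eqVneq v e) => [->|] //=; rewrite ?ab ?be ?if_same.
rewrite ffunE.
case: (eqVneq u a) => [ua|ua]; case: (eqVneq v e) => [ve|ve]; case: (eqVneq b c) => [bc|bc];
  rewrite /= ?andbF ?if_same //.
by subst; rewrite eqxx /= in H; rewrite H.
Qed.

Definition dg (h : X -> K) : ifun := [ffun p => if p.1 == p.2 then h p.1 else 0%R].

Lemma imul_dgl (h : X -> K) (f : ifun) : imul (dg h) f = [ffun p => if (p.1 <= p.2)%O then (h p.1 * f p)%R else 0%R].
Proof.
apply/ffunP => [[u v]]; rewrite !ffunE /=.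
under eq_bigr => t _ do rewrite ffunE /= [u == t]eq_sym (fun_if (fun z => z * f (t, v))%R) mul0r.
by rewrite sum_if_eq le_refl.
Qed.

Lemma imul_dgr (h : X -> K) (f : ifun) : imul f (dg h) = [ffun p => if (p.1 <= p.2)%O then (f p * h p.2)%R else 0%R].
Proof.
apply/ffunP => [[u v]]; rewrite !ffunE /=.
under eq_bigr => t _ do rewrite ffunE /= (fun_if (fun z => f (u, t) * z)%R) mulr0.
by rewrite sum_if_eq le_refl andbT.
Qed.

Lemma ilie_dg_eu (h : X -> K) (a b : X) : (a <= b)%O -> ilie (dg h) (eu a b) = iscale (h a - h b)%R (eu a b).
Proof.
move=> ab; apply/ffunP => [[u v]]; rewrite /Defs.ilie imul_dgl imul_dgr !ffunE /=.
rewrite xpair_eqE; case: (eqVneq u a) => [->|]; case: (eqVneq v b) => [->|] /=;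
  rewrite ?ab ?mulr1 ?mul1r ?mulr0 ?mul0r ?subrr ?if_same ?subr0 ?mulrBl //.
Qed.

Lemma ilie_dg_dg (h1 h2 : X -> K) : ilie (dg h1) (dg h2) = 0%R.
Proof.
apply/ffunP => [[u v]]; rewrite /Defs.ilie !imul_dgl !ffunE /=.
case: (eqVneq u v) => [<-|uv]; rewrite ?eqxx; case: ifP => _; rewrite ?(negPf uv) ?mulr0 ?subrr //.
by rewrite mulrC subrr.

Qed.

Lemma eu_dg (x : X) : eu x x = dg (fun u => if u == x then 1%R else 0%R).
Proof.
apply/ffunP => [[u v]]; rewrite !ffunE /= xpair_eqE.
case: (eqVneq u x) => [->|ux] /=; last by case: ifP.
by rewrite eq_sym.
Qed.

Lemma incid_expand (f : ifun) : incid f ->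
  f = (\sum_(p : X * X | (p.1 <= p.2)%O) iscale (f p) (eu p.1 p.2))%R.
Proof.
move=> /forallP inc; apply/ffunP => q; rewrite sum_ffunE.
under eq_bigr => p _ do rewrite !ffunE -surjective_pairing (fun_if (fun z => f p * z)%R) mulr1 mulr0 [q == p]eq_sym.
rewrite sum_if_eq; case: ifP => // h.
by have := inc q; rewrite h /= => /eqP.
Qed.

End Alg.

Section Phi.
Local Open Scope ring_scope.
Variables (d : Order.disp_t) (X : finPOrderType d) (K : fieldType).
Variables (theta th' : Bidx X -> Bidx X) (sigma : X -> X -> K).
Hypothesis thK : cancel theta th'.
Hypothesis thK' : cancel th' theta.
Hypothesis conn : connected_poset X.
Hypothesis adm : admissible theta.
Hypothesis mono : monotone_max_chains theta.
Hypothesis snz : forall x y : X, (x < y)%O -> sigma x y != 0.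
Hypothesis comp : compatible theta sigma.
Variable z0 : X.

Local Notation ifun := {ffun X * X -> K}.
Let inj : injective theta := can_inj thK.
Local Notation pre := (pre th').

Definition cK (x u : X) : K := (cpot theta conn z0 x u)%:~R + (x == z0)%:R.

Lemma cK_diff (x u v : X) : (u < v)%O ->
  cK x u - cK x v = ((pre u v).1 == x)%:R - ((pre u v).2 == x)%:R.
Proof.
move=> uv.
have e : ((cpot theta conn z0 x u - cpot theta conn z0 x v)%:~R : K) = (g th' x u v)%:~R
  by rewrite (cpot_g thK thK' conn adm z0 mono x uv).
rewrite /g !intrB in e; rewrite /cK; rewrite -[_%:R - _%:R]e; ring.
Qed.

Lemma cK_z0 (x : X) : cK x z0 = (x == z0)%:R.
Proof.
have [p l] := W_spec conn z0 z0.
rewrite /cK /cpot /P (adm_Om x adm p l) oppr0 add0r //.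
Qed.

Lemma diag_inj (lam : X -> K) : (forall u, \sum_x lam x * cK x u = 0) -> forall x, lam x = 0.
Proof.
move=> H.
have l0 : lam z0 = 0.
  have := H z0; under eq_bigr => x _ do rewrite cK_z0.
  rewrite (bigD1 z0) //= eqxx mulr1 big1 ?addr0 // => x /negPf ->; by rewrite mulr0.
have lt_eq : forall y z, (y < z)%O -> lam y = lam z.
  move=> y z yz.
  have uv_lt := thv_lt theta yz.
  have e : \sum_x lam x * (cK x (thv theta y z).1 - cK x (thv theta y z).2) = 0.
    under eq_bigr => x _ do rewrite mulrBr.
    by rewrite sumrB !H subrr.
  move: e; under eq_bigr => x _ do rewrite cK_diff // (pre_thv thK yz) /= mulrBr.
  rewrite sumrB.
  rewrite (bigD1 y) //= eqxx mulr1 big1 ?addr0; last first.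
    by move=> x /negPf; rewrite eq_sym => ->; rewrite mulr0.
  rewrite (bigD1 z) //= eqxx mulr1 big1 ?addr0; last first.
    by move=> x /negPf; rewrite eq_sym => ->; rewrite mulr0.
  by move/eqP; rewrite subr_eq0 => /eqP.
have adj_eq : forall a b, adj a b -> lam a = lam b.
  move=> a b; rewrite /adj /covers => /orP [/andP [ba _] | /andP [ab _]].
  - by rewrite (lt_eq _ _ ba).
  - by rewrite (lt_eq _ _ ab).
have gen : forall a s, path (adj (X:=X)) a s -> lam (last a s) = lam a.
  move=> a s; elim: s a => [|v s IH] a //= /andP [av p].
  by rewrite IH // (adj_eq _ _ av).
move=> x; have [p l] := W_spec conn z0 x.
by have := gen _ _ p; rewrite l l0.
Qed.

Lemma diag_surj (h : X -> K) : exists lam : X -> K, forall u, \sum_x lam x * cK x u = h u.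
Proof.
pose n := #|X|.
pose M : 'M[K]_n := \matrix_(i < n, j < n) cK (enum_val i) (enum_val j).
have sumE : forall (F : X -> K), \sum_x F x = \sum_(i < n) F (enum_val i).
  by move=> F; rewrite -(big_enum_val F).
have rf : row_free M.
  apply: inj_row_free => v vM.
  have lam0 := diag_inj (lam := fun x => v 0 (enum_rank x)).
  apply/rowP => i; rewrite mxE -[i]enum_valK lam0 //.
  move=> u; rewrite sumE.
  have := congr1 (fun A : 'M[K]_(1, n) => A 0 (enum_rank u)) vM; rewrite !mxE => e.
  rewrite -[X in _ = X]e.
  by apply: eq_bigr => j _; rewrite enum_valK mxE enum_rankK.
have uM : M \in unitmx by rewrite -row_free_unit.
pose r : 'rV[K]_n := \row_j h (enum_val j).
pose v := r *m invmx M.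
exists (fun x => v 0 (enum_rank x)) => u.
have : v *m M = r by rewrite /v mulmxKV.
move/(congr1 (fun A : 'M[K]_(1, n) => A 0 (enum_rank u))); rewrite !mxE enum_rankK => <-.
by rewrite sumE; apply: eq_bigr => j _; rewrite enum_valK; congr (_ * _); rewrite /M mxE enum_rankK.
Qed.

Definition Phi (f : ifun) : ifun := [ffun p : X * X =>
  if (p.1 < p.2)%O then sigma (pre p.1 p.2).1 (pre p.1 p.2).2 * f (pre p.1 p.2)
  else if p.1 == p.2 then \sum_x f (x, x) * cK x p.1 else 0].

Lemma Phi_incid f : incid (Phi f).
Proof.
apply/forallP => [[u v]] /=; apply/implyP => nuv; rewrite ffunE /=.
rewrite (negPf (contraNN (@ltW _ _ u v) nuv)).
case: (eqVneq u v) => [e|ne]; first by move: nuv; rewrite e le_refl.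
by rewrite ?(negPf ne).
Qed.

Lemma Phi_lin a f g : Phi (iscale a f + g) = iscale a (Phi f) + Phi g.
Proof.
apply/ffunP => p; rewrite !ffunE; case: ifP => _; first by ring.
case: ifP => _; last by rewrite mulr0 addr0.
rewrite mulr_sumr -big_split /=; apply: eq_bigr => x _; rewrite !ffunE; ring.
Qed.

Lemma Phi0 : Phi 0 = 0.
Proof.
apply/ffunP => p; rewrite !ffunE; case: ifP => _; first by rewrite ?ffunE mulr0.
by case: ifP => // _; rewrite big1 // => x _; rewrite ?ffunE mul0r.
Qed.

Lemma Phi_add f g : Phi (f + g) = Phi f + Phi g.
Proof. by rewrite -{1}(iscale1 f) Phi_lin iscale1. Qed.

Lemma Phi_scale a f : Phi (iscale a f) = iscale a (Phi f).
Proof. by rewrite -[iscale a f]addr0 Phi_lin Phi0 addr0. Qed.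

Lemma Phi_opp f : Phi (- f) = - Phi f.
Proof. by rewrite -iscaleN1 Phi_scale iscaleN1. Qed.

Lemma Phi_sum (I : finType) (P : pred I) (F : I -> ifun) :
  Phi (\sum_(i | P i) F i) = \sum_(i | P i) Phi (F i).
Proof. by apply: (big_morph Phi) => [f h|]; [exact: Phi_add | exact: Phi0]. Qed.

Lemma Phi_eu_lt (x y : X) : (x < y)%O -> Phi (eu K x y) = iscale (sigma x y) (thE K theta x y).
Proof.
move=> xy; apply/ffunP => [[u v]]; rewrite !ffunE /=.
have hxy := thv_lt theta xy.
case: (boolP (u < v)%O) => uv.
  case: (eqVneq (pre u v) (x, y)) => e.
    have ht := thv_pre thK' uv; rewrite e /= in ht.
    by rewrite e /= ht /= eqxx.
  rewrite mulr0; case: eqP => [[eu ev]|_]; last by rewrite mulr0.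
  by move: e; rewrite eu ev pre_thv // eqxx.
have -> : ((u, v) == ((thv theta x y).1, (thv theta x y).2)) = false.
  apply/negP => /eqP [eu ev]; move: uv; by rewrite eu ev hxy.
rewrite mulr0; case: ifP => // _; rewrite big1 // => t _.
rewrite ffunE xpair_eqE; case: (eqVneq t x) => [tx|] /=; last by rewrite mul0r.
by case: (eqVneq t y) => [ty|]; rewrite ?mul0r //; move: xy; rewrite -tx -ty ltxx.
Qed.

Lemma Phi_eu_eq (x : X) : Phi (eu K x x) = dg (cK x).
Proof.
apply/ffunP => [[u v]]; rewrite !ffunE /=.
case: (boolP (u < v)%O) => uv.
  rewrite (lt_eqF uv); case: eqP => [e|_]; last by rewrite mulr0.
  by have := pre_lt th' uv; rewrite e ltxx.
case: ifP => // _.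
under eq_bigr => t _ do rewrite ffunE xpair_eqE andbb (fun_if (fun z => z * cK t u)) mul1r mul0r.
by rewrite sum_if_eq.
Qed.

Lemma noncomp (x y z w : X) : (x < y)%O -> (z < w)%O -> y != z -> w != x ->
  (thv theta x y).2 != (thv theta z w).1.
Proof.
move=> xy zw yz wx; apply/negP => /eqP eb.
have ab := thv_lt theta xy; have be := thv_lt theta zw.
rewrite eb in ab.
have [x' [y' [z' [xy' yz' e hc]]]] := tri_inv mono inj ab be.
move: hc; rewrite /tri_case e /= => [[[h1 h2]|[h1 h2]]].
- rewrite -eb -surjective_pairing in h1; rewrite -surjective_pairing in h2.
  have [e1 e2] := thv_inj inj xy' xy h1; have [e3 e4] := thv_inj inj yz' zw h2.
  by move: yz; rewrite -e2 -e3 eqxx.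
- rewrite -surjective_pairing in h1; rewrite -eb -surjective_pairing in h2.
  have [e1 e2] := thv_inj inj xy' zw h1; have [e3 e4] := thv_inj inj yz' xy h2.
  by move: wx; rewrite -e2 -e3 eqxx.
Qed.

Lemma lie_diag_off (x y z : X) : (y < z)%O ->
  Phi (ilie (eu K x x) (eu K y z)) = ilie (Phi (eu K x x)) (Phi (eu K y z)).
Proof.
move=> yz.
rewrite eu_dg ilie_dg_eu ?(ltW yz) // Phi_scale -eu_dg Phi_eu_eq !Phi_eu_lt //.
rewrite ilie_scaler /thE ilie_dg_eu ?(ltW (thv_lt theta yz)) //.
rewrite cK_diff ?(thv_lt theta yz) // (pre_thv thK yz) /= !iscaleA; congr iscale.
by rewrite mulrC; case: (y == x); case: (z == x).
Qed.

Lemma lie_chain (x y w : X) : (x < y)%O -> (y < w)%O ->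
  Phi (ilie (eu K x y) (eu K y w)) = ilie (Phi (eu K x y)) (Phi (eu K y w)).
Proof.
move=> xy yw; have xw := lt_trans xy yw.
rewrite /Defs.ilie !eu_mul eqxx (ltW xy) (ltW yw) /=.
have -> : (w == x) = false by apply/negbTE; rewrite gt_eqF.
rewrite subr0 !Phi_eu_lt // imul_scalel imul_scaler imul_scalel imul_scaler.
have [b hb] := tri_fwd mono xy yw.
have [_ ab bc] := tri_mid xy yw hb.
have ac := lt_trans ab bc.
have [c1 c2] := comp xy yw.
case: hb => [[h1 h2]|[h1 h2]].
- have hm : thE K theta x w = imul (thE K theta x y) (thE K theta y w).
    by rewrite /thE h1 h2 /= eu_mul eqxx (ltW ab) (ltW bc).
  by rewrite (c1 hm) -hm /thE h1 h2 /= eu_mul (gt_eqF ac) /= !iscale0 subr0 iscaleA.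

- have hm : thE K theta x w = imul (thE K theta y w) (thE K theta x y).
    by rewrite /thE h1 h2 /= eu_mul eqxx (ltW ab) (ltW bc).
  rewrite (c2 hm) /thE h1 h2 /= !eu_mul eqxx (ltW ab) (ltW bc) (gt_eqF ac) /=. rewrite !iscale0 sub0r.
  apply/ffunP => p; rewrite !ffunE; ring.
Qed.

Lemma lie_basis (a1 b1 a2 b2 : X) : (a1 <= b1)%O -> (a2 <= b2)%O ->
  Phi (ilie (eu K a1 b1) (eu K a2 b2)) = ilie (Phi (eu K a1 b1)) (Phi (eu K a2 b2)).
Proof.
rewrite le_eqVlt => /orP [/eqP <- | h1]; rewrite le_eqVlt => /orP [/eqP <- | h2].
- by rewrite !Phi_eu_eq !eu_dg ilie_dg_dg Phi0 ilie_dg_dg.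
- exact: lie_diag_off.
- by rewrite ilie_anti Phi_opp lie_diag_off // -ilie_anti.
case: (eqVneq b1 a2) => [e|ne1].
  by subst a2; apply: lie_chain.
case: (eqVneq b2 a1) => [e|ne2].
  by subst a1; rewrite ilie_anti Phi_opp lie_chain // -ilie_anti.
rewrite /Defs.ilie !eu_mul (negPf ne1) (negPf ne2) /= subr0 Phi0.
rewrite !Phi_eu_lt // imul_scalel imul_scaler imul_scalel imul_scaler /thE !eu_mul.
rewrite (negPf (noncomp h1 h2 ne1 ne2)).
by rewrite (negPf (noncomp h2 h1 ne2 ne1)) /= !iscale0 subrr.
Qed.

Lemma iscale_sum (I : finType) (P : pred I) (F : I -> ifun) a :
  iscale a (\sum_(i | P i) F i) = \sum_(i | P i) iscale a (F i).
Proof. by apply: (big_morph (iscale a)) => [f h|]; [exact: iscale_add | exact: iscale0]. Qed.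

Lemma Phi_lie f g : incid f -> incid g -> Phi (ilie f g) = ilie (Phi f) (Phi g).
Proof.
move=> hf hg.
set F := \sum_(p : X * X | (p.1 <= p.2)%O) iscale (f p) (eu K p.1 p.2).
set G := \sum_(p : X * X | (p.1 <= p.2)%O) iscale (g p) (eu K p.1 p.2).
have ef : f = F by exact: incid_expand.
have eg : g = G by exact: incid_expand.
rewrite ef eg {ef eg} /F /G.
transitivity (\sum_(p : X * X | (p.1 <= p.2)%O) \sum_(q : X * X | (q.1 <= q.2)%O)
   iscale (f p) (iscale (g q) (Phi (ilie (eu K p.1 p.2) (eu K q.1 q.2))))).
  rewrite ilie_suml Phi_sum; apply: eq_bigr => p _.
  rewrite ilie_scalel ilie_sumr Phi_scale Phi_sum iscale_sum; apply: eq_bigr => q _.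
  by rewrite ilie_scaler Phi_scale.
rewrite !Phi_sum ilie_suml; apply: eq_bigr => p hp.
rewrite Phi_scale ilie_scalel ilie_sumr iscale_sum; apply: eq_bigr => q hq.
by rewrite Phi_scale ilie_scaler lie_basis.
Qed.

Lemma Phi_sub f g : Phi (f - g) = Phi f - Phi g.
Proof. by rewrite Phi_add Phi_opp. Qed.

Lemma Phi_inj f g : incid f -> incid g -> Phi f = Phi g -> f = g.
Proof.
move=> /forallP hf /forallP hg e.
have h0 : Phi (f - g) = 0 by rewrite Phi_sub e subrr.
apply/eqP; rewrite -subr_eq0; apply/eqP/ffunP => [[u v]]; rewrite !ffunE /=.
case: (boolP (u < v)%O) => uv.
  have := congr1 (fun F : ifun => F (thv theta u v)) h0.
  rewrite !ffunE (thv_lt theta uv) (pre_thv thK uv) /= ?ffunE => /eqP.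
  by rewrite mulf_eq0 (negPf (snz uv)) /= => /eqP.
case: (eqVneq u v) => [<-|nuv].
  have H := diag_inj (lam := fun x => (f - g) (x, x)).
  suff e0 : (f - g) (u, u) = 0 by move: e0; rewrite !ffunE.
  apply: H => w.
  have := congr1 (fun F : ifun => F (w, w)) h0; rewrite !ffunE /= ltxx eqxx => e1.
  rewrite -[X in _ = X]e1; apply: eq_bigr => x _; by rewrite ?ffunE.
have nle : ~~ (u <= v)%O by rewrite le_eqVlt negb_or nuv.
by have := hf (u, v); have := hg (u, v); rewrite /= nle /= => /eqP -> /eqP ->; rewrite subrr.
Qed.

Lemma Phi_surj g : incid g -> exists2 f, incid f & Phi f = g.
Proof.
move=> /forallP hg.
have [lam hl] := diag_surj (fun u => g (u, u)).
pose f : ifun := [ffun p : X * X => if (p.1 < p.2)%O then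
    g (thv theta p.1 p.2) / sigma p.1 p.2
  else if p.1 == p.2 then lam p.1 else 0].
exists f.
  apply/forallP => [[u v]] /=; apply/implyP => nuv; rewrite ffunE /=.
  rewrite (negPf (contraNN (@ltW _ _ u v) nuv)).
  case: (eqVneq u v) => [e|ne]; first by move: nuv; rewrite e le_refl.
  by rewrite ?(negPf ne).
apply/ffunP => [[u v]]; rewrite !ffunE /=.
case: (boolP (u < v)%O) => uv.
  rewrite (pre_lt th' uv) (thv_pre thK' uv) mulrC -mulrA mulVf ?mulr1 //.
  exact: snz (pre_lt th' uv).
case: (eqVneq u v) => [<-|nuv].
  by rewrite -hl; apply: eq_bigr => x _; rewrite ?ffunE /= ltxx eqxx.
have nle : ~~ (u <= v)%O by rewrite le_eqVlt negb_or nuv.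
by have := hg (u, v); rewrite /= nle /= => /eqP ->.
Qed.

End Phi.

Theorem lemma5p16 (K : fieldType) (d : Order.disp_t) (X : finPOrderType d)
  (theta : Bidx X -> Bidx X) (sigma : X -> X -> K) :
  connected_poset X ->
  bijective theta ->
  admissible theta ->
  monotone_max_chains theta ->
  (forall x y : X, x < y -> sigma x y != 0%R) ->
  compatible theta sigma ->
  exists phi : {ffun X * X -> K} -> {ffun X * X -> K},
    elementary phi /\
    forall x y : X, x < y -> phi (eu K x y) = iscale (sigma x y) (thE K theta x y).
Proof.
move=> conn [th' thK thK'] adm mono snz comp.
case: (pickP (@predT X)) => [z0 _|X0]; last first.
  exists id; have la : lie_aut (X:=X) (K:=K) id.
    split.
    - by [].
    - by [].
    - by move=> f g _ _.
    - by move=> g hg; exists g.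
    - by [].
  split; last by move=> x; have := X0 x.
  split => //; exists id; split => // x; by have := X0 x.
pose phi := Phi theta th' sigma conn z0.
have la : lie_aut phi.
  split.
  - move=> f _; exact: Phi_incid.
  - move=> a f g _ _; exact: Phi_lin.
  - move=> f g hf hg; exact: (Phi_inj thK thK' adm mono snz).
  - move=> g hg; exact: (Phi_surj thK thK' conn adm mono snz z0 hg).
  - move=> f g hf hg; exact: (Phi_lie thK thK' conn adm mono comp z0 hf hg).
exists phi; split; last by move=> x y xy; exact: Phi_eu_lt.
split => //; exists phi; split => // x y.
rewrite le_eqVlt => /orP [/eqP <- | xy].
  rewrite /phi Phi_eu_eq lint_refl; apply/ffunP => [[u v]]; rewrite !ffunE /=.
  case: (eqVneq u v) => [<-|]; first by rewrite le_refl lint_refl eqxx.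
  by rewrite if_same.
rewrite /phi Phi_eu_lt //.
apply/ffunP => [[u v]]; rewrite !ffunE /=.
case: eqP => [[-> ->]|_]; last by rewrite GRing.mulr0 if_same.
by rewrite (ltW (thv_lt theta xy)) (lint_pres mono (can_inj thK) xy) eqxx.
Qed.
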